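(* Let $K\ge1$, $x_1,\dots,x_n\in\mathbb{R}^p$, $\mathsf y_1,\dots,\mathsf y_n\in\mathbb{R}^{K+1}$, and suppose a minimizer $\hat{\mathsf B}$ of $\sum_i\mathcal L_i(\mathsf B^Tx_i)$ over $\mathsf B\in\mathbb{R}^{p\times(K+1)}$ exists and that $\sum_{l=1}^nH_l\otimes(x_lx_l^T)$ is invertible, where $\hat B=\hat{\mathsf B}Q$. Then $V_i=Q^T\mathsf V_iQ$ for every $i\in[n]$.
   Context: $Q\in\mathbb{R}^{(K+1)\times K}$ satisfies $QQ^T=I_{K+1}-\frac{1}{K+1}\mathbf 1\mathbf 1^T$, $Q^TQ=I_K$. $\mathcal L_i(u)=-\sum_k\mathsf y_{ik}u_k+\log\sum_{k'}e^{u_{k'}}$. $\hat{\mathsf p}_{ik}=\exp(x_i^T\hat{\mathsf B}e_k)/\sum_{k'}\exp(x_i^T\hat{\mathsf B}e_{k'})$, $\mathsf H_i=\operatorname{diag}(\hat{\mathsf p}_i)-\hat{\mathsf p}_i\hat{\mathsf p}_i^T$, $\mathsf V_i=\mathsf H_i-(\mathsf H_i\otimes x_i^T)[\sum_l\mathsf H_l\otimes(x_lx_l^T)]^\dagger(\mathsf H_i\otimes x_i)$ ($\dagger$ = Moore–Penrose inverse). $H_i=Q^T\mathsf H_iQ$ (the Hessian of $u\mapsto\mathcal L_i(Qu)$ at $\hat B^Tx_i$), $V_i=H_i-(H_i\otimes x_i^T)[\sum_lH_l\otimes(x_lx_l^T)]^{-1}(H_i\otimes x_i)$. *)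

(* Defs.v *)
From HB Require Import structures.
From mathcomp Require Import all_boot all_order all_algebra.
From mathcomp Require Import all_classical all_reals all_analysis.
From mathcomp Require Export mxtens.
Set Implicit Arguments. Unset Strict Implicit. Unset Printing Implicit Defensive.
Import Order.TTheory GRing.Theory Num.Theory.
Local Open Scope ring_scope.

Section Defs.
Variable R : realType.

Definition is_mp_inverse {m n} (A : 'M[R]_(m, n)) (X : 'M[R]_(n, m)) : Prop :=
  [/\ A *m X *m A = A, X *m A *m X = X,
      (A *m X)^T = A *m X & (X *m A)^T = X *m A].

Definition mp_inverse {m n} (A : 'M[R]_(m, n)) : 'M[R]_(n, m) :=
  xget 0 (is_mp_inverse A).

Definition mlogit_loss {k} (y u : 'cV[R]_k) : R :=
  - (\sum_(j < k) y j 0 * u j 0) + ln (\sum_(j < k) expR (u j 0)).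

Definition softmax {k} (u : 'cV[R]_k) : 'cV[R]_k :=
  \col_j (expR (u j 0) / \sum_(j' < k) expR (u j' 0)).

Definition Hs {p k} (B : 'M[R]_(p, k)) (x : 'cV[R]_p) : 'M[R]_k :=
  let ph := softmax (B^T *m x) in diag_mx ph^T - ph *m ph^T.

Definition kron_rowv {k p} (H : 'M[R]_k) (x : 'cV[R]_p) : 'M[R]_(k, k * p) :=
  castmx (muln1 k, erefl) (H *t x^T).
Definition kron_colv {k p} (H : 'M[R]_k) (x : 'cV[R]_p) : 'M[R]_(k * p, k) :=
  castmx (erefl, muln1 k) (H *t x).

Definition gram_kron {n k p} (H : 'I_n -> 'M[R]_k) (x : 'I_n -> 'cV[R]_p)
  : 'M[R]_(k * p) := \sum_(l < n) (H l *t (x l *m (x l)^T)).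

Definition Vs {n k p} (H : 'I_n -> 'M[R]_k) (x : 'I_n -> 'cV[R]_p) (i : 'I_n)
  : 'M[R]_k :=
  H i - kron_rowv (H i) (x i) *m mp_inverse (gram_kron H x)
        *m kron_colv (H i) (x i).

Definition Vr {n k p} (H : 'I_n -> 'M[R]_k) (x : 'I_n -> 'cV[R]_p) (i : 'I_n)
  : 'M[R]_k :=
  H i - kron_rowv (H i) (x i) *m invmx (gram_kron H x)
        *m kron_colv (H i) (x i).

End Defs.

(* Main.v *)
Require Import Defs.
From HB Require Import structures.
From mathcomp Require Import all_boot all_order all_algebra.
From mathcomp Require Import all_classical all_reals all_analysis.
Import Order.TTheory GRing.Theory Num.Theory.
Local Open Scope ring_scope.

Section Helpers.
Variable R : realType.

Lemma mp_uniq {m n} (A : 'M[R]_(m, n)) X Y :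
  is_mp_inverse A X -> is_mp_inverse A Y -> X = Y.
Proof.
move=> [h1 h2 h3 h4] [g1 g2 g3 g4].
have eAX : A *m X = A *m Y.
  transitivity ((A *m X)^T *m (A *m Y)^T).
    by rewrite -trmx_mul mulmxA g1 h3.
  by rewrite h3 g3 mulmxA h1.
have h1' : A *m (X *m A) = A by rewrite mulmxA h1.
have eXA : X *m A = Y *m A.
  transitivity (X *m A *m (Y *m A)).
    by rewrite -[in LHS]g1 !mulmxA.
  by rewrite -h4 -g4 -trmx_mul -mulmxA h1' g4.
by rewrite -{1}h2 -mulmxA eAX mulmxA eXA g2.
Qed.

Lemma mp_UMUt {a b} (U : 'M[R]_(a, b)) (M : 'M[R]_b) :
  U^T *m U = 1%:M -> M \in unitmx ->
  mp_inverse (U *m M *m U^T) = U *m invmx M *m U^T.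
Proof.
move=> hU hM; rewrite /mp_inverse.
have hP : is_mp_inverse (U *m M *m U^T) (U *m invmx M *m U^T).
  have e1 : U *m M *m U^T *m (U *m invmx M *m U^T) = U *m U^T.
    by rewrite !mulmxA -(mulmxA _ U^T U) hU mulmx1 -(mulmxA U M) mulmxV // mulmx1.
  have e2 : U *m invmx M *m U^T *m (U *m M *m U^T) = U *m U^T.
    by rewrite !mulmxA -(mulmxA _ U^T U) hU mulmx1 -(mulmxA U (invmx M)) mulVmx // mulmx1.
  split.
  - by rewrite e1 !mulmxA -(mulmxA _ U^T U) hU mulmx1.
  - by rewrite e2 !mulmxA -(mulmxA _ U^T U) hU mulmx1.
  - by rewrite e1 trmx_mul trmxK.
  - by rewrite e2 trmx_mul trmxK.
apply: xget_unique => // Y hY; exact: mp_uniq hY hP.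
Qed.


Lemma castL {a a' b b' c} (ea : a' = a) (e : b' = b) (C : 'M[R]_(a, b)) (D : 'M[R]_(b', c)) :
  C *m castmx (e, erefl) D = castmx (ea, erefl) (castmx (esym ea, esym e) C *m D).
Proof. by subst; rewrite !castmx_id. Qed.

Lemma castR {a a' b b' c} (ea : a' = a) (e : b' = b) (C : 'M[R]_(b, a)) (D : 'M[R]_(c, b')) :
  castmx (erefl, e) D *m C = castmx (erefl, ea) (D *m castmx (esym e, esym ea) C).
Proof. by subst; rewrite !castmx_id. Qed.

Lemma castmulL {a a' b c} (e : a = a') (M : 'M[R]_(a, b)) (N : 'M[R]_(b, c)) :
  castmx (e, erefl) M *m N = castmx (e, erefl) (M *m N).
Proof. by subst; rewrite !castmx_id. Qed.

Lemma castmulR {a a' b c} (e : a = a') (M : 'M[R]_(c, a)) (N : 'M[R]_(b, c)) :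
  N *m castmx (erefl, e) M = castmx (erefl, e) (N *m M).
Proof. by subst; rewrite !castmx_id. Qed.

Lemma tens11 a b : (1%:M : 'M[R]_a) *t (1%:M : 'M[R]_b) = 1%:M.
Proof.
apply/matrixP=> i j.
case: (mxtens_indexP i)=> i0 i1; case: (mxtens_indexP j)=> j0 j1.
rewrite tensmxE !mxE (inj_eq (can_inj (@mxtens_indexK _ _))) xpair_eqE.
by case: (i0 == j0); case: (i1 == j1); rewrite /= ?mulr1 ?mulr0 ?mul0r.
Qed.

Lemma rowv_conj {k K p} (Q : 'M[R]_(k, K)) (A : 'M[R]_k) (x : 'cV[R]_p) :
  Q^T *m kron_rowv A x *m (Q *t 1%:M) = kron_rowv (Q^T *m A *m Q) x.
Proof.
rewrite /kron_rowv (castL (muln1 K)).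
have -> : castmx (esym (muln1 K), esym (muln1 k)) Q^T = Q^T *t (1%:M : 'M[R]_1).
  by rewrite tens_mx_scalar scale1r.
rewrite castmulL.
by rewrite !tensmx_mul mul1mx mulmx1.
Qed.

Lemma colv_conj {k K p} (Q : 'M[R]_(k, K)) (A : 'M[R]_k) (x : 'cV[R]_p) :
  (Q *t 1%:M)^T *m kron_colv A x *m Q = kron_colv (Q^T *m A *m Q) x.
Proof.
rewrite /kron_colv castmulR (castR (muln1 K)).
have -> : castmx (esym (muln1 k), esym (muln1 K)) Q = Q *t (1%:M : 'M[R]_1).
  by rewrite tens_mx_scalar scale1r.
by rewrite trmx_tens trmx1 !tensmx_mul mul1mx mulmx1.
Qed.

Lemma softmax_sum k (u : 'cV[R]_k.+1) : \sum_j softmax u j 0 = 1.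
Proof.
rewrite /softmax; under eq_bigr do rewrite mxE; rewrite -mulr_suml divff //.
rewrite gt_eqF // big_ord_recl; apply: ltr_pwDl; first exact: expR_gt0.
by apply: sumr_ge0 => l _; apply: ltW; exact: expR_gt0.
Qed.

Lemma HJ k (ph : 'cV[R]_k) : \sum_j ph j 0 = 1 ->
  (diag_mx ph^T - ph *m ph^T) *m (const_mx 1 : 'M[R]_k) = 0.
Proof.
move=> hs; apply/matrixP=> i j; rewrite !mxE.
under eq_bigr do rewrite !mxE mulr1.
rewrite sumrB (bigD1 i) //= big1 => [|l /negbTE hl]; last by rewrite eq_sym hl mulr0n.
rewrite eqxx mulr1n addr0.
under eq_bigr do rewrite big_ord1 !mxE.
by rewrite -mulr_sumr hs mulr1 subrr.
Qed.

End Helpers.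

Theorem lemmaS3p2 (R : realType) (K n p : nat) (hK : (1 <= K)%N)
  (Q : 'M[R]_(K.+1, K))
  (hQQt : Q *m Q^T = 1%:M - (K.+1)%:R^-1 *: const_mx 1)
  (hQtQ : Q^T *m Q = 1%:M)
  (x : 'I_n -> 'cV[R]_p) (y : 'I_n -> 'cV[R]_(K.+1))
  (Bs : 'M[R]_(p, K.+1))
  (hmin : forall B : 'M[R]_(p, K.+1),
     \sum_(i < n) mlogit_loss (y i) (Bs^T *m x i)
       <= \sum_(i < n) mlogit_loss (y i) (B^T *m x i))
  (hinv : gram_kron (fun l => Q^T *m Hs Bs (x l) *m Q) x \in unitmx) :
  forall i : 'I_n,
    Vr (fun l => Q^T *m Hs Bs (x l) *m Q) x i
    = Q^T *m Vs (fun l => Hs Bs (x l)) x i *m Q.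
Proof.
move=> i.
have hHJ l : Hs Bs (x l) *m (const_mx 1 : 'M[R]_(K.+1)) = 0.
  by rewrite /Hs; apply: HJ; apply: softmax_sum.
have hJH l : (const_mx 1 : 'M[R]_(K.+1)) *m Hs Bs (x l) = 0.
  have hT : (Hs Bs (x l))^T = Hs Bs (x l).
    by rewrite /Hs linearB /= tr_diag_mx trmx_mul trmxK.
  by move: (hHJ l) => /(congr1 trmx); rewrite trmx_mul hT trmx_const trmx0.
have hHs l : Q *m (Q^T *m Hs Bs (x l) *m Q) *m Q^T = Hs Bs (x l).
  move: (hHJ l) (hJH l); move: (Hs Bs (x l)) => H h1 h2.
  rewrite !mulmxA hQQt -mulmxA hQQt.
  rewrite mulmxBr mulmx1 mulmxBl mul1mx -scalemxAl h2 scaler0 subr0.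
  by rewrite -scalemxAr h1 scaler0 subr0.
set U := Q *t (1%:M : 'M[R]_p).
have hU : U^T *m U = 1%:M by rewrite /U trmx_tens trmx1 tensmx_mul hQtQ mulmx1 tens11.
set M := gram_kron (fun l => Q^T *m Hs Bs (x l) *m Q) x.
have hG : gram_kron (fun l => Hs Bs (x l)) x = U *m M *m U^T.
  rewrite /M /gram_kron mulmx_sumr mulmx_suml; apply: eq_bigr => l _.
  by rewrite /U trmx_tens trmx1 !tensmx_mul mul1mx mulmx1 hHs.
rewrite /Vr /Vs hG mp_UMUt // [in RHS]mulmxBr [in RHS]mulmxBl /=.
congr (_ - _).
have -> : Q^T *m (kron_rowv (Hs Bs (x i)) (x i) *m (U *m invmx M *m U^T) *m
     kron_colv (Hs Bs (x i)) (x i)) *m Q =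
  (Q^T *m kron_rowv (Hs Bs (x i)) (x i) *m U) *m invmx M *m
  (U^T *m kron_colv (Hs Bs (x i)) (x i) *m Q) by rewrite !mulmxA.
by rewrite rowv_conj colv_conj.
Qed.
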